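(* Let $\eta(0)\in\Omega$. Then the vector $B_L\Gamma\sin(\eta)$ is a conserved quantity of the dynamical system $\dot\eta=B_S^T(\eta)\omega_G$, $M\dot\omega_G=-A\omega_G-B_G\Gamma\sin(\eta)+u$ over the interval of existence of the solution.
   Context: A power network is modeled on a connected undirected graph with $n$ nodes and $m$ edges, nodes partitioned into $n_g$ generator and $n_\ell$ load nodes. $B$ is an incidence matrix partitioned row-wise as $B=\begin{bmatrix}B_G^T & B_L^T\end{bmatrix}^T$ (generator rows, load rows). $\Gamma=\mathrm{diag}(\gamma_k)$ is positive definite, $M,A$ are positive definite diagonal, $u\in\mathbb{R}^{n_g}$. $\sin,\cos$ act elementwise, $\Omega=(-\frac{\pi}{2},\frac{\pi}{2})^m$, $\Gamma'(\eta)=\Gamma\,\mathrm{diag}(\cos(\eta_k))$, and $B_S(\eta)=B_G\big(I-\Gamma'(\eta)B_L^T(B_L\Gamma'(\eta)B_L^T)^{-1}B_L\big)$. The state is $(\eta,\omega_G)\in\operatorname{im}B^T\times\mathbb{R}^{n_g}$. *)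

(* Defs.v *)
From HB Require Import structures.
From mathcomp Require Import all_boot all_order all_algebra.
From mathcomp Require Import all_classical all_reals all_analysis.
Set Implicit Arguments. Unset Strict Implicit. Unset Printing Implicit Defensive.
Import Order.TTheory GRing.Theory Num.Theory.
Local Open Scope ring_scope.

(* A graph on nodes 'I_n with edges 'I_m; edge e goes (with an arbitrary
   fixed orientation) from src e to tgt e. *)
Definition incidence (R : pzRingType) (n m : nat) (src tgt : 'I_m -> 'I_n)
  : 'M[R]_(n, m) :=
  \matrix_(i, e) ((i == src e)%:R - (i == tgt e)%:R).

Definition graph_adj (n m : nat) (src tgt : 'I_m -> 'I_n) : rel 'I_n :=
  fun i j => [exists e, ((src e == i) && (tgt e == j))
                      || ((src e == j) && (tgt e == i))].

Definition graph_connected (n m : nat) (src tgt : 'I_m -> 'I_n) : Prop :=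
  (forall e, src e != tgt e) /\ (forall i j, connect (graph_adj src tgt) i j).

Definition sinv (R : realType) (m : nat) (x : 'cV[R]_m) : 'cV[R]_m :=
  map_mx (@sin R) x.

Definition in_Omega (R : realType) (m : nat) (x : 'cV[R]_m) : Prop :=
  forall k, - (pi / 2) < x k 0 < pi / 2.

Definition in_imBT (R : realType) (n m : nat) (B : 'M[R]_(n, m)) (x : 'cV[R]_m)
  : Prop := exists y : 'cV[R]_n, x = B^T *m y.

Definition Gammap (R : realType) (m : nat) (gamma : 'rV[R]_m) (eta : 'cV[R]_m)
  : 'M[R]_m :=
  diag_mx gamma *m diag_mx (\row_k cos (eta k 0)).

Definition B_S (R : realType) (ng nl m : nat) (BG : 'M[R]_(ng, m))
  (BL : 'M[R]_(nl, m)) (gamma : 'rV[R]_m) (eta : 'cV[R]_m) : 'M[R]_(ng, m) :=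
  let G := Gammap gamma eta in
  BG *m (1%:M - G *m BL^T *m invmx (BL *m G *m BL^T) *m BL).

(* Main.v *)
Require Import Defs.
From HB Require Import structures.
From mathcomp Require Import all_boot all_order all_algebra.
From mathcomp Require Import all_classical all_reals all_analysis.
From mathcomp Require Import ring lra.
Import Order.TTheory GRing.Theory Num.Theory numFieldNormedType.Exports.
Local Open Scope ring_scope.
Local Open Scope classical_set_scope.

Lemma const_on (R : realType) (f : R -> R) (I : set R) a b :
  is_interval I -> (forall t, I t -> is_derive t 1 f 0) -> I a -> I b -> f a = f b.
Proof.
move=> iI df.
wlog ab : a b / a <= b.
  move=> H Ia Ib; case: (leP a b) => [/H|/ltW /H]; first by apply.
  by move=> h; rewrite h.
move=> Ia Ib.
have sub x : x \in `[a, b]%R -> I x.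
  by rewrite in_itv /= => xab; apply: (iI a b).
have d1 : forall x, x \in `]a, b[%R -> is_derive x 1 f ((fun=> 0 : R) x).
  move=> x xab; apply: df; apply: sub; rewrite in_itv /= !ltW ?(itvP xab) //.
have d2 : {within `[a, b], continuous f}.
  apply: derivable_within_continuous => x /sub Ix.
  by have [] := df x Ix.
have [c _ h] := MVT_segment ab d1 d2.
by apply/eqP; rewrite eq_sym -subr_eq0 h mul0r.
Qed.

Lemma deriv_sum_sin (R : realType) (m : nat) (c : 'I_m -> R)
  (e : R -> 'cV[R]_m) (de : 'I_m -> R) (t : R) :
  (forall k, is_derive t (1:R) (fun s => e s k 0) (de k)) ->
  is_derive t (1:R) (fun s => \sum_k c k * sin (e s k 0))
     (\sum_k c k * (cos (e t k 0) * de k)).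
Proof.
move=> H.
have -> : (fun s => \sum_k c k * sin (e s k 0))
   = \sum_k (fun s => c k * sin (e s k 0)).
  by rewrite fct_sumE.
apply: is_derive_sum => k.
Qed.
Lemma sum_delta (R : realType) n (y : 'rV[R]_n) (s : 'I_n) :
  \sum_i y 0 i * (i == s)%:R = y 0 s.
Proof.
rewrite (bigD1 s) //= eqxx mulr1 big1 ?addr0 // => i /negPf ->.
by rewrite mulr0.
Qed.

Lemma X_unit (R : realType) g nl m (src tgt : 'I_m -> 'I_(g.+1 + nl))
  (w : 'rV[R]_m) :
  graph_connected src tgt -> (forall k, 0 < w 0 k) ->
  dsubmx (incidence R src tgt) *m diag_mx w *m (dsubmx (incidence R src tgt))^T
    \in unitmx.
Proof.
move=> [_ conn] wpos.
set B := incidence R src tgt.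
rewrite -row_free_unit; apply: inj_row_free => v Hv.
set BL := dsubmx B.
set z := v *m BL.
have zz : \sum_k w 0 k * z 0 k ^+ 2 = 0.
  have : (v *m (BL *m diag_mx w *m BL^T) *m v^T) 0 0 = 0.
    by rewrite Hv mul0mx mxE.
  rewrite !mulmxA -/z -mulmxA -trmx_mul -/z mul_mx_diag mxE => E; apply: eq_trans E; apply: eq_bigr => k _.
  by rewrite !mxE; ring.
have z0 k : z 0 k = 0.
  have nn : forall k', predT k' -> 0 <= w 0 k' * z 0 k' ^+ 2.
    by move=> k' _; rewrite mulr_ge0 ?sqr_ge0 // ltW.
  have := @psumr_eq0P _ _ predT (fun k => w 0 k * z 0 k ^+ 2) nn zz k isT.
  by move/eqP; rewrite mulf_eq0 (gt_eqF (wpos k)) /= expf_eq0 /= => /eqP.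
set y := row_mx (0 : 'rV[R]_g.+1) v.
have yz k : y 0 (src k) - y 0 (tgt k) = z 0 k.
  have -> : z = y *m B by rewrite /z /BL -[B in RHS]vsubmxK mul_row_col mul0mx add0r.
  rewrite [RHS]mxE /B /incidence.
  under [RHS]eq_bigr do rewrite [X in _ * X]mxE mulrBr.
  by rewrite sumrB !sum_delta.
have adj i j : graph_adj src tgt i j -> y 0 i = y 0 j.
  move=> /existsP [e /orP [/andP [/eqP <- /eqP <-]|/andP [/eqP <- /eqP <-]]].
    by apply/eqP; rewrite -subr_eq0 yz z0.
  by apply/eqP; rewrite eq_sym -subr_eq0 yz z0.
have all_eq i j : y 0 i = y 0 j.
  have /connectP [p pth ->] := conn i j.
  elim: p i pth => [|a p IH] i //= /andP [ia pth].
  by rewrite (adj _ _ ia) IH.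
apply/rowP => j; rewrite mxE.
have -> : v 0 j = y 0 (rshift g.+1 j) by rewrite row_mxEr.
by rewrite (all_eq _ (lshift nl ord0)) row_mxEl mxE.
Qed.
Lemma key (R : realType) ng nl m (BG : 'M[R]_(ng, m)) (BL : 'M[R]_(nl, m))
  (W : 'M[R]_m) (om : 'cV[R]_ng) : W^T = W ->
  (BL *m W *m BL^T \in unitmx) \/ BG^T *m om = 0 ->
  BL *m W *m (BG *m (1%:M - W *m BL^T *m invmx (BL *m W *m BL^T) *m BL))^T *m om = 0.
Proof.
move=> WT H.
set X := BL *m W *m BL^T.
have XT : X^T = X by rewrite /X !trmx_mul trmxK WT mulmxA.
rewrite trmx_mul linearB /= trmx1 !trmx_mul trmxK trmx_inv XT WT.
case: H => [Xu|v0]; last by rewrite -!mulmxA v0 !mulmx0.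
rewrite !mulmxA mulmxBr mulmx1 !mulmxA -/X mulmxV // mul1mx subrr !mul0mx.
by [].
Qed.

Lemma Gammap_diag (R : realType) m (gamma : 'rV[R]_m) (eta : 'cV[R]_m) :
  Gammap gamma eta = diag_mx (\row_k (gamma 0 k * cos (eta k 0))).
Proof.
rewrite /Gammap mul_mx_diag; apply/matrixP => i j; rewrite !mxE.
by case: eqVneq => [->|_]; rewrite ?mulr1n ?mulr0n ?mul0r.
Qed.

Lemma unit_or (R : realType) ng nl m (src tgt : 'I_m -> 'I_(ng + nl))
  (gamma : 'rV[R]_m) (eta : 'cV[R]_m) (om : 'cV[R]_ng) :
  graph_connected src tgt -> (forall k, 0 < gamma 0 k) -> in_Omega eta ->
  (dsubmx (incidence R src tgt) *m Gammap gamma eta *m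
     (dsubmx (incidence R src tgt))^T \in unitmx)
  \/ (usubmx (incidence R src tgt))^T *m om = 0.
Proof.
case: ng src tgt om => [|g] src tgt om Hc Hg Ho.
  by right; rewrite thinmx0 mul0mx.
left; rewrite Gammap_diag; apply: X_unit => // k.
rewrite mxE mulr_gt0 // cos_gt0_pihalf //.
Qed.
Theorem proposition3 (R : realType) (ng nl m : nat)
  (src tgt : 'I_m -> 'I_(ng + nl))
  (gamma : 'rV[R]_m) (Mv Av : 'rV[R]_ng) (u : 'cV[R]_ng)
  (I : set R) (eta : R -> 'cV[R]_m) (om dom : R -> 'cV[R]_ng) :
  graph_connected src tgt ->
  (forall k, 0 < gamma 0 k) -> (forall i, 0 < Mv 0 i) -> (forall i, 0 < Av 0 i) ->
  open I -> is_interval I -> I 0 ->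
  in_Omega (eta 0) -> in_imBT (incidence R src tgt) (eta 0) ->
  (forall t, I t -> in_Omega (eta t)) ->
  (forall t, I t -> forall k,
     is_derive t 1 (fun s => eta s k 0)
       (((B_S (usubmx (incidence R src tgt)) (dsubmx (incidence R src tgt))
            gamma (eta t))^T *m om t) k 0)) ->
  (forall t, I t -> forall i, is_derive t 1 (fun s => om s i 0) (dom t i 0)) ->
  (forall t, I t ->
     diag_mx Mv *m dom t
     = - (diag_mx Av *m om t)
       - usubmx (incidence R src tgt) *m diag_mx gamma *m sinv (eta t) + u) ->
  forall t, I t ->
    dsubmx (incidence R src tgt) *m diag_mx gamma *m sinv (eta t)
    = dsubmx (incidence R src tgt) *m diag_mx gamma *m sinv (eta 0).
Proof.
move=> Hc Hg HM HA Iopen Iint I0 Om0 imB OmI Heta Hom Hdyn t It.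
set B := incidence R src tgt.
set BL := dsubmx B.
apply/matrixP => j z; rewrite [z]ord1.
pose c k := BL j k * gamma 0 k.
have fE s : (BL *m diag_mx gamma *m sinv (eta s)) j 0
    = \sum_k c k * sin (eta s k 0).
  by rewrite mxE; apply: eq_bigr => k _; rewrite /c /BL /B mul_mx_diag /sinv !mxE.
rewrite !fE.
apply: (@const_on R (fun s => \sum_k c k * sin (eta s k 0)) I t 0 Iint _ It I0).
move=> s Is.
have D := @deriv_sum_sin R m c _ _ s (Heta s Is).
apply: is_derive_eq D _.
set W := Gammap gamma (eta s).
have K := @key R ng nl m (usubmx B) BL W (om s).
have WT : W^T = W by rewrite /W Gammap_diag tr_diag_mx.
have := K WT (@unit_or R ng nl m src tgt gamma (eta s) (om s) Hc Hg (OmI s Is)).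
rewrite /B_S -/W -mulmxA => /(congr1 (fun M : 'cV[R]_nl => M j 0)).
rewrite [in X in X = _]mxE [in X in _ = X]mxE => E.
apply: (eq_trans _ E); apply: eq_bigr => k _.
rewrite /c /W Gammap_diag mul_mx_diag [in RHS]mxE [(\row__ _) 0 k]mxE.
ring.
Qed.
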